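(* Let $\rho$ be a ray and let $h_0=|\rho|$. Fix one side of $\rho$ (counterclockwise or clockwise), let $\gamma$ be the neighbor of $\rho$ on that side in $\Sigma_{h_0}$, and set $w_s=u_\gamma+s\,u_\rho$ for integers $s\ge 0$. Then for every $h\ge h_0$, a ray $\nu$ is the neighbor of $\rho$ on that side in $\Sigma_h$ if and only if $u_\nu=w_a$ for some $a\ge 0$ such that $|w_a|\le h$ and $|w_s|>h$ for all $s>a$.
   Context: A ray is a half-line $\rho=\mathbb{R}_{\ge 0}v\subset\mathbb{R}^2$ with $v\in\mathbb{Z}^2\setminus\{0\}$; $u_\rho$ is its primitive lattice generator. On $\mathbb{Z}^2$ use the norm $|(x,y)|=\max\{|x|,|y|\}$, and $|\rho|=|u_\rho|$. $\Sigma_h$ is the complete fan whose rays are all rays $\rho$ with $|\rho|\le h$ and whose $2$-dimensional cones are spanned by angularly consecutive such rays. The neighbors of $\rho\in\Sigma_h(1)$ are the two rays of $\Sigma_h$ adjacent to $\rho$ in angular order. *)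

(* Defs.v *)
From HB Require Import structures.
From mathcomp Require Import all_boot all_order all_algebra.
Set Implicit Arguments. Unset Strict Implicit. Unset Printing Implicit Defensive.
Import Order.TTheory GRing.Theory Num.Theory.
Local Open Scope ring_scope.

Definition vec := (int * int)%type.

(* A ray is identified with its primitive lattice generator u_rho. *)
Definition primitive (v : vec) : bool := gcdz v.1 v.2 == 1.

Definition nrm (v : vec) : nat := maxn `|v.1|%N `|v.2|%N.

Definition det (u v : vec) : int := u.1 * v.2 - u.2 * v.1.
Definition dot (u v : vec) : int := u.1 * v.1 + u.2 * v.2.

(* side: true = counterclockwise, false = clockwise (mirror image). *)
Definition sdet (ccw : bool) (u v : vec) : int := if ccw then det u v else - det u v.

(* half ccw u v = 0 iff the (ccw or cw) angle from u to v lies in [0, pi),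
   and 1 iff it lies in [pi, 2 pi). *)
Definition half (ccw : bool) (u v : vec) : nat :=
  if (0 < sdet ccw u v) || ((sdet ccw u v == 0) && (0 < dot u v)) then 0%N else 1%N.

(* ang_lt ccw u v1 v2: the angle (measured on the chosen side, in [0, 2pi))
   from u to v1 is strictly smaller than the one from u to v2. *)
Definition ang_lt (ccw : bool) (u v1 v2 : vec) : bool :=
  (half ccw u v1 < half ccw u v2)%N ||
  ((half ccw u v1 == half ccw u v2) && (0 < sdet ccw v1 v2)).

Definition in_fan (h : nat) (v : vec) : bool := primitive v && (nrm v <= h)%N.

Definition is_nbr (ccw : bool) (h : nat) (rho nu : vec) : Prop :=
  [/\ in_fan h rho, in_fan h nu, nu != rho &
      forall v, in_fan h v -> v != rho -> ~~ ang_lt ccw rho v nu].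

Definition wvec (gamma rho : vec) (s : nat) : vec :=
  (gamma.1 + (s%:Z) * rho.1, gamma.2 + (s%:Z) * rho.2).

(* Main.v *)
Require Import Defs.
From HB Require Import structures.
From mathcomp Require Import all_boot all_order all_algebra.
From mathcomp Require Import zify ring lra.
Import Order.TTheory GRing.Theory Num.Theory.

Set Implicit Arguments. Unset Strict Implicit.
Section Aux.
Local Open Scope ring_scope.

Definition comb (x y : int) (p q : vec) : vec := (x * p.1 + y * q.1, x * p.2 + y * q.2).

Lemma nrm_leP v h : (nrm v <= h)%N <-> `|v.1| <= h%:Z /\ `|v.2| <= h%:Z.
Proof. rewrite /nrm; split; lia. Qed.

Lemma nrm_leP' v h : (nrm v <= h)%N <->
  [/\ -(h%:Z) <= v.1, v.1 <= h%:Z, -(h%:Z) <= v.2 & v.2 <= h%:Z].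
Proof. rewrite /nrm; split; [move=> ?; split; lia | case; lia]. Qed.

Lemma nrm_ge v : `|v.1| <= (nrm v)%:Z /\ `|v.2| <= (nrm v)%:Z.
Proof. by apply/nrm_leP. Qed.

Lemma nrm_mono u v : `|u.1| <= `|v.1| -> `|u.2| <= `|v.2| -> (nrm u <= nrm v)%N.
Proof. move=> h1 h2; apply/nrm_leP; have [h3 h4] := nrm_ge v. split.
 exact: le_trans h1 h3. exact: le_trans h2 h4. Qed.

Lemma mono (p q y c a : int) : 0 <= p * q -> 1 <= y -> 0 <= a -> a+1 <= c ->
  `|q + (a+1) * p| <= `|y * q + c * p|.
Proof.
move=> pq y1 a0 ac.
have [p0|p0] := lerP 0 p; have [q0|q0] := lerP 0 q.
- have h1 : 0 <= q + (a+1) * p by nia.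
  have h2 : q + (a+1) * p <= y * q + c * p by nia.
  rewrite !ger0_norm //; lia.
- have qp : p = 0 by nia.
  subst p. rewrite !mulr0 !addr0 normrM (ger0_norm (le_trans ler01 y1)); nia.
- have qp : q = 0 by nia.
  subst q. rewrite mulr0 !add0r.
  have h1 : (a+1) * p <= 0 by nia.
  have h2 : c * p <= (a+1) * p by nia.
  rewrite !ler0_norm //; lia.
- have h1 : q + (a+1) * p <= 0 by nia.
  have h2 : y * q + c * p <= q + (a+1) * p by nia.
  rewrite !ler0_norm //; lia.
Qed.

Lemma bnd (D rr x y z hh : int): 0 < rr -> rr < D -> D * x = rr * y + z ->
  -hh <= y -> y <= hh -> -hh <= z -> z <= hh -> -hh <= x /\ x <= hh.
Proof. move=> *. split; nia. Qed.

Lemma prim_iff v : primitive v <-> exists a b : int, a * v.1 + b * v.2 = 1.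
Proof.
rewrite /primitive; split.
  by move=> h; have /coprimezP [[a b] /= e] := h; exists a, b.
by move=> [a [b e]]; apply/(@coprimezP v.1 v.2); exists (a, b).
Qed.

Lemma prim_ne0 v : primitive v -> v.1 != 0 \/ v.2 != 0.
Proof.
move=> /prim_iff [a [b e]].
case: (eqVneq v.1 0) => [e1|]; last by left.
right; apply/eqP => e2; move: e; rewrite e1 e2 !mulr0 addr0 => /eqP.
by rewrite eq_sym oner_eq0.
Qed.

Lemma sdet1_prim ccw r v : sdet ccw r v = 1 -> primitive v.
Proof.
move=> H; apply/prim_iff; move: H; rewrite /sdet /det; case: ccw => H.
  by exists (-r.2), r.1; lia.
by exists r.2, (-r.1); lia.
Qed.

Lemma sdet_bez ccw r : primitive r -> exists g, sdet ccw r g = 1.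
Proof.
move=> /prim_iff [a [b e]]; rewrite /sdet /det; case: ccw.
  by exists (-b, a) => /=; lia.
by exists (b, -a) => /=; lia.
Qed.

Lemma S_id ccw u : sdet ccw u u = 0.
Proof. rewrite /sdet /det; case: ccw => /=; ring. Qed.

Lemma S_anti ccw u v : sdet ccw v u = - sdet ccw u v.
Proof. rewrite /sdet /det; case: ccw => /=; ring. Qed.

Lemma S_combR ccw u x y p q :
  sdet ccw u (comb x y p q) = x * sdet ccw u p + y * sdet ccw u q.
Proof. rewrite /sdet /det /comb /=; case: ccw => /=; ring. Qed.

Lemma S_comb11 ccw r g x y :
  sdet ccw (comb x 1 r g) (comb y 1 r g) = (x - y) * sdet ccw r g.
Proof. rewrite /sdet /det /comb /=; case: ccw => /=; ring. Qed.

Lemma ident ccw r w v : sdet ccw r w = 1 ->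
  v = comb (sdet ccw v w) (sdet ccw r v) r w.
Proof.
case: v => v1 v2; rewrite /comb /sdet /det /=; case: ccw => H; congr pair.
- have E : (r.1*w.2 - r.2*w.1) * v1 = (v1 * w.2 - v2 * w.1) * r.1 + (r.1*v2 - r.2*v1) * w.1 by ring.
  by rewrite H mul1r in E.
- have E : (r.1*w.2 - r.2*w.1) * v2 = (v1 * w.2 - v2 * w.1) * r.2 + (r.1*v2 - r.2*v1) * w.2 by ring.
  by rewrite H mul1r in E.
- have E : (- (r.1*w.2 - r.2*w.1)) * v1 = (- (v1 * w.2 - v2 * w.1)) * r.1 + (- (r.1*v2 - r.2*v1)) * w.1 by ring.
  by rewrite H mul1r in E.
- have E : (- (r.1*w.2 - r.2*w.1)) * v2 = (- (v1 * w.2 - v2 * w.1)) * r.2 + (- (r.1*v2 - r.2*v1)) * w.2 by ring.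
  by rewrite H mul1r in E.
Qed.

Lemma wvec_comb g r t : wvec g r t = comb t%:Z 1 r g.
Proof. by rewrite /wvec /comb !mul1r [_ + g.1]addrC [_ + g.2]addrC. Qed.

Lemma identD ccw r w v :
  sdet ccw r w * v.1 = sdet ccw v w * r.1 + sdet ccw r v * w.1 /\
  sdet ccw r w * v.2 = sdet ccw v w * r.2 + sdet ccw r v * w.2.
Proof. rewrite /sdet /det; case: ccw => /=; split; ring. Qed.

Lemma half0 ccw u v : 0 < sdet ccw u v -> Defs.half ccw u v = 0%N.
Proof. by rewrite /Defs.half => ->. Qed.

Lemma PE ccw r g : sdet ccw r g = 0 -> 0 < dot r g -> primitive r -> primitive g ->
  r = g.
Proof.
move=> S0 D0 /prim_iff [a [b e]] /prim_iff [c [d f]].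
have d0 : r.1 * g.2 - r.2 * g.1 = 0.
  by move: S0; rewrite /sdet /det; case: ccw => //; move/eqP; rewrite oppr_eq0 => /eqP.
set k := c * r.1 + d * r.2.
set k' := a * g.1 + b * g.2.
have e1 : r.1 = k * g.1.
  have -> : k * g.1 = r.1 * (c * g.1 + d * g.2) - d * (r.1 * g.2 - r.2 * g.1) by rewrite /k; ring.
  by rewrite f d0; ring.
have e2 : r.2 = k * g.2.
  have -> : k * g.2 = r.2 * (c * g.1 + d * g.2) + c * (r.1 * g.2 - r.2 * g.1) by rewrite /k; ring.
  by rewrite f d0; ring.
have e3 : g.1 = k' * r.1.
  have -> : k' * r.1 = g.1 * (a * r.1 + b * r.2) + b * (r.1 * g.2 - r.2 * g.1) by rewrite /k'; ring.
  by rewrite e d0; ring.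
have e4 : g.2 = k' * r.2.
  have -> : k' * r.2 = g.2 * (a * r.1 + b * r.2) - a * (r.1 * g.2 - r.2 * g.1) by rewrite /k'; ring.
  by rewrite e d0; ring.
have kk : k * k' = 1.
  have : (1 - k * k') * r.1 = 0 by rewrite mulrBl mul1r -mulrA -e3 -e1 subrr.
  have : (1 - k * k') * r.2 = 0 by rewrite mulrBl mul1r -mulrA -e4 -e2 subrr.
  have [r1|r2] := (@prim_ne0 _) (proj2 (prim_iff r) (ex_intro _ a (ex_intro _ b e))).
    by move=> _ /eqP; rewrite mulf_eq0 (negbTE r1) orbF subr_eq0 => /eqP <-.
  by move=> /eqP; rewrite mulf_eq0 (negbTE r2) orbF subr_eq0 => /eqP <-.
have k1 : k = 1 \/ k = -1.
  have := congr1 absz kk; rewrite abszM => /eqP; rewrite muln_eq1 => /andP[/eqP h _].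
  lia.
case: k1 => k1.
  apply: injective_projections.
    by rewrite e1 k1 mul1r.
  by rewrite e2 k1 mul1r.
exfalso; move: D0; rewrite /dot e1 e2 k1; nia.
Qed.

Lemma ax_fan h (e : vec) : (1 <= h)%N ->
  e = (1,0) \/ e = (0,1) \/ e = (-1,0) \/ e = (0,-1) -> in_fan h e.
Proof. by move=> h1; case=> [->|[->|[->|->]]]; rewrite /in_fan /nrm /=. Qed.

Lemma fan_h1 h r : in_fan h r -> (1 <= h)%N.
Proof.
case/andP=> /prim_ne0 H hn; apply: leq_trans hn; rewrite /nrm.
by case: H => H; lia.
Qed.

Lemma ax_pos ccw (r : vec) : r.1 != 0 \/ r.2 != 0 ->
  (0 < sdet ccw r (1,0)) \/ (0 < sdet ccw r (0,1)) \/ (0 < sdet ccw r (-1,0))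
     \/ (0 < sdet ccw r (0,-1)).
Proof. by rewrite /sdet /det /=; case: ccw; case => ?; lia. Qed.

Lemma between ccw h r n v : is_nbr ccw h r n -> in_fan h v ->
  0 < sdet ccw r v -> 0 < sdet ccw v n -> 0 < sdet ccw r n -> False.
Proof.
case=> _ _ _ H fv h1 h2 h3.
have nv : v != r by apply/eqP => e; move: h1; rewrite e S_id.
by move: (H v fv nv); rewrite /ang_lt !half0 // h2 ltnn /=. 
Qed.

Lemma nbr_pos ccw h r n : is_nbr ccw h r n -> 0 < sdet ccw r n.
Proof.
move=> nb; case: (nb) => fr fn nr H.
have h1 := @fan_h1 _ _ fr.
have rne := (@prim_ne0 _) (proj1 (andP fr)).
have [e [ee Se]] : exists e : vec, (e = (1,0) \/ e = (0,1) \/ e = (-1,0) \/ e = (0,-1))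
     /\ 0 < sdet ccw r e.
  have : (0 < sdet ccw r (1,0)) \/ (0 < sdet ccw r (0,1)) \/ (0 < sdet ccw r (-1,0))
     \/ (0 < sdet ccw r (0,-1)).
    by apply: ax_pos.
  case=> [?|[?|[?|?]]].
  - by exists (1,0); split; [left|].
  - by exists (0,1); split; [right; left|].
  - by exists (-1,0); split; [right; right; left|].
  - by exists (0,-1); split; [right; right; right|].
have fe := @ax_fan _ _ h1 ee.
have ne : e != r by apply/eqP => q; move: Se; rewrite q S_id.
move: (H e fe ne); rewrite /ang_lt /Defs.half Se /=.
case: (boolP (0 < sdet ccw r n)) => // Sn.
case: (boolP ((sdet ccw r n == 0) && (0 < dot r n))) => [/andP [/eqP a b] | _] //=.
by exfalso; move/eqP: nr; apply; symmetry; apply: PE a b _ _; [case/andP: fr|case/andP: fn].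
Qed.

Lemma nbr_one ccw h r n : is_nbr ccw h r n -> sdet ccw r n = 1.
Proof.
move=> nb; have Dp := nbr_pos nb; case: (nb) => fr fn nr H.
set D := sdet ccw r n in Dp *.
have [D1|D2] : D = 1 \/ 2 <= D by lia.
  by [].
exfalso.
have [g Sg] := sdet_bez ccw (proj1 (andP fr)).
set m := sdet ccw g n.
set q := (m %/ D)%Z; set rr := (m %% D)%Z.
have Dn0 : D != 0 by lia.
have rr0 := modz_ge0 m Dn0.
have rrD : rr < D by have := ltz_mod m Dn0; rewrite gtr0_norm.
have me : m = q * D + rr by apply: divz_eq.
set v : vec := comb 1 (- q) g r.
have Srv : sdet ccw r v = 1 by rewrite S_combR S_id Sg; ring.
have Svn : sdet ccw v n = rr.
  rewrite S_anti S_combR (S_anti _ g n) (S_anti _ r n) -/m -/D me; ring.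
have [i1 i2] := identD ccw r n v.
rewrite -/D Svn Srv mul1r in i1; rewrite -/D Svn Srv mul1r in i2.
have [rr0'|rrp] : rr = 0 \/ 0 < rr by lia.
  have [a [b ab]] := proj1 (prim_iff n) (proj1 (andP fn)).
  rewrite rr0' mul0r add0r in i1; rewrite rr0' mul0r add0r in i2.
  have : D * (a * v.1 + b * v.2) = 1 by rewrite -ab -i1 -i2; ring.
  move: (a * v.1 + b * v.2) D2 => X; clearbody D => D2' E.
  have [X1|X0] := lerP 1 X; nia.
have fv : in_fan h v.
  apply/andP; split; first exact: sdet1_prim Srv.
  have /andP [_ /nrm_leP' [r1 r2 r3 r4]] := fr.
  have /andP [_ /nrm_leP' [n1 n2 n3 n4]] := fn.
  have [x1 x2] := bnd rrp rrD i1 r1 r2 n1 n2.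
  have [x3 x4] := bnd rrp rrD i2 r3 r4 n3 n4.
  by apply/nrm_leP'; split.
apply: (between nb fv) => //; [by rewrite Srv | by rewrite Svn].
Qed.

Lemma negprod (x y : int): x * y < 0 -> (0 < x /\ y < 0) \/ (x < 0 /\ 0 < y).
Proof.
move=> H; have [x0|x0|x0] := ltgtP x 0.
- right; split => //; nia.
- left; split => //; nia.
- by move: H; rewrite x0 mul0r ltxx.
Qed.

Lemma axb1 ccw (r g : vec) : r.1 * g.1 < 0 ->
  (0 < sdet ccw r (0,1) /\ 0 < sdet ccw (0,1) g) \/
  (0 < sdet ccw r (0,-1) /\ 0 < sdet ccw (0,-1) g).
Proof.
move=> /negprod H; rewrite /sdet /det /=; case: ccw; case: H => [[a b]|[a b]].
- by left; split; lia.
- by right; split; lia.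
- by right; split; lia.
- by left; split; lia.
Qed.

Lemma axb2 ccw (r g : vec) : r.2 * g.2 < 0 ->
  (0 < sdet ccw r (1,0) /\ 0 < sdet ccw (1,0) g) \/
  (0 < sdet ccw r (-1,0) /\ 0 < sdet ccw (-1,0) g).
Proof.
move=> /negprod H; rewrite /sdet /det /=; case: ccw; case: H => [[a b]|[a b]].
- by right; split; lia.
- by left; split; lia.
- by left; split; lia.
- by right; split; lia.
Qed.

Lemma orth ccw h r g : is_nbr ccw h r g -> 0 <= r.1 * g.1 /\ 0 <= r.2 * g.2.
Proof.
move=> nb; have Sp := nbr_pos nb; case: (nb) => fr _ _ _.
have h1 := @fan_h1 _ _ fr.
split; rewrite leNgt; apply/negP => neg.
- case: (axb1 ccw neg) => [[a b]|[a b]].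
    by apply: (between nb _ a b Sp); apply: ax_fan => //; right; left.
  by apply: (between nb _ a b Sp); apply: ax_fan => //; right; right; right.
- case: (axb2 ccw neg) => [[a b]|[a b]].
    by apply: (between nb _ a b Sp); apply: ax_fan => //; left.
  by apply: (between nb _ a b Sp); apply: ax_fan => //; right; right; left.
Qed.

Lemma main_aux (ccw : bool) (rho gamma : vec) :
  primitive rho ->
  is_nbr ccw (nrm rho) rho gamma ->
  forall (h : nat) (nu : vec),
    (nrm rho <= h)%N -> primitive nu ->
    (is_nbr ccw h rho nu <->
     exists a : nat, nu = wvec gamma rho a /\ (nrm (wvec gamma rho a) <= h)%N /\
       forall s : nat, (a < s)%N -> (h < nrm (wvec gamma rho s))%N).
Proof.
move=> pr nbg h nu hh pnu.
have S1 := nbr_one nbg.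
have [o1 o2] := orth nbg.
case: (nbg) => _ /andP [pg ng] gr _.
have fg : in_fan h gamma by rewrite /in_fan pg (leq_trans ng hh).
have fr : in_fan h rho by rewrite /in_fan pr hh.
have Sw : forall t : nat, sdet ccw rho (wvec gamma rho t) = 1.
  by move=> t; rewrite wvec_comb S_combR S_id S1; ring.
have Sww : forall x y : nat,
    sdet ccw (wvec gamma rho x) (wvec gamma rho y) = x%:Z - y%:Z.
  by move=> x y; rewrite !wvec_comb S_comb11 S1 mulr1.
have fw : forall t : nat, (nrm (wvec gamma rho t) <= h)%N -> in_fan h (wvec gamma rho t).
  by move=> t ht; rewrite /in_fan ht (sdet1_prim (Sw t)).
split.
- move=> nbn. have Sn := nbr_one nbn.
  set s := sdet ccw nu gamma.
  have en : nu = comb s 1 rho gamma by rewrite {1}(@ident ccw rho gamma nu S1) Sn.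
  have s0 : 0 <= s.
    rewrite leNgt; apply/negP => sn.
    apply: (between nbn fg); rewrite ?S1 ?Sn //.
    rewrite en S_combR S_id (S_anti _ rho gamma) S1; lia.
  exists `|s|%N.
  have es : (`|s|%N)%:Z = s by rewrite gez0_abs.
  have ew : nu = wvec gamma rho `|s|%N by rewrite wvec_comb es.
  split => //; split; first by rewrite -ew; case: (nbn) => _ /andP [].
  move=> t lt; rewrite ltnNge; apply/negP => ht.
  apply: (between nbn (fw t ht)); rewrite ?Sw ?Sn //.
  rewrite ew Sww; lia.
- case=> a [ea [ha hs]].
  have Sn : sdet ccw rho nu = 1 by rewrite ea Sw.
  split => //.
  + by rewrite /in_fan pnu /= ea ha.
  + by apply/eqP => e; move: Sn; rewrite e S_id => /eqP; rewrite eq_sym oner_eq0.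
  move=> v fv nv; apply/negP => hlt.
  move: hlt; rewrite /ang_lt (@half0 ccw rho nu) ?Sn // ltn0 /=.
  case/andP => /eqP hv Svn.
  move: hv; rewrite /Defs.half; case: ifP => // cond _.
  have Srv : 0 < sdet ccw rho v.
    case/orP: cond => // /andP [/eqP a0 b0]; exfalso; move/eqP: nv; apply; symmetry.
    by apply: PE a0 b0 pr _; case/andP: fv.
  have ev := @ident ccw rho nu v Sn.
  have en : nu = comb a%:Z 1 rho gamma by rewrite ea wvec_comb.
  move: ev Svn Srv; set x := sdet ccw v nu; set y := sdet ccw rho v => ev Svn Srv.
  have c1 : v.1 = y * gamma.1 + (x + y * a%:Z) * rho.1 by rewrite {1}ev {1}en /comb /=; ring.
  have c2 : v.2 = y * gamma.2 + (x + y * a%:Z) * rho.2 by rewrite {1}ev {1}en /comb /=; ring.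
  have hle := hs a.+1 (ltnSn a).
  have : (nrm (wvec gamma rho a.+1) <= nrm v)%N.
    have e1 : (a.+1)%:Z = a%:Z + 1 by lia.
    apply: nrm_mono; rewrite /wvec /= ?c1 ?c2 e1; apply: mono => //; nia.
  case/andP: fv => _ fv; lia.
Qed.

End Aux.

Theorem mainTheorem9 (ccw : bool) (rho gamma : vec) :
  primitive rho ->
  is_nbr ccw (nrm rho) rho gamma ->
  forall (h : nat) (nu : vec),
    (nrm rho <= h)%N -> primitive nu ->
    (is_nbr ccw h rho nu <->
     exists a : nat, nu = wvec gamma rho a /\ (nrm (wvec gamma rho a) <= h)%N /\
       forall s : nat, (a < s)%N -> (h < nrm (wvec gamma rho s))%N).
Proof. exact: main_aux. Qed.
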